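(* Let $\mathbb{N}_\vee$ be the semigroup $\mathbb{N}$ with operation $m\vee n=\max\{m,n\}$, and for $n\in\mathbb{N}\cup\{\infty\}$ let $\phi_n\in\Delta(\ell^1(\mathbb{N}_\vee))$ be $\phi_n(\sum_i\alpha_i\delta_i)=\sum_{i=1}^n\alpha_i$. Then $\ell^1(\mathbb{N}_\vee)$ is approximately left character biprojective (in particular approximately left $\phi_\infty$-biprojective), but $\ell^1(\mathbb{N}_\vee)$ is not $\phi_\infty$-biprojective.
   Context: The characters of $\ell^1(\mathbb{N}_\vee)$ are exactly the $\phi_n$, $n\in\mathbb{N}\cup\{\infty\}$. For a Banach algebra $A$, $A\otimes_pA$ is the projective tensor product with $a\cdot(b\otimes c)=ab\otimes c$, $(b\otimes c)\cdot a=b\otimes ca$, $\pi_A(a\otimes b)=ab$. For a character $\phi$, $A$ is $\phi$-biprojective if there is a bounded $A$-bimodule morphism $\rho:A\to A\otimes_pA$ with $\phi(\pi_A(\rho(a)))=\phi(a)$ for all $a\in A$. $A$ is approximately left $\phi$-biprojective if there is a net $(\rho_\alpha)$ of bounded linear maps $A\to A\otimes_pA$ such that for all $a,x\in A$: $\|a\cdot\rho_\alpha(x)-\rho_\alpha(ax)\|\to0$, $\|\rho_\alpha(xa)-\phi(a)\rho_\alpha(x)\|\to0$, $\phi(\pi_A(\rho_\alpha(x)))-\phi(x)\to0$; approximately left character biprojective means this holds for every character. *)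

(* Defs.v *)
From Stdlib Require Import Reals Lra ClassicalEpsilon.
Open Scope R_scope.

Definition C : Type := (R * R)%type.
Definition C0 : C := (0, 0).
Definition Cadd (z w : C) : C := (fst z + fst w, snd z + snd w).
Definition Copp (z : C) : C := (- fst z, - snd z).
Definition Csub (z w : C) : C := Cadd z (Copp w).
Definition Cmul (z w : C) : C :=
  (fst z * fst w - snd z * snd w, fst z * snd w + snd z * fst w).
Definition Cabs (z : C) : R := sqrt (fst z * fst z + snd z * snd z).

Fixpoint Csum (f : nat -> C) (n : nat) : C :=
  match n with O => C0 | S m => Cadd (Csum f m) (f m) end.
Fixpoint Rsum (f : nat -> R) (n : nat) : R :=
  match n with O => 0 | S m => Rsum f m + f m end.

(** * The algebra l^1(N_v):  a : nat -> C stands for sum_i a i delta_i.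
    The semigroup N is indexed from 0 here (the paper starts at 1). *)
Definition seq := nat -> C.

Definition l1_le (a : seq) (K : R) : Prop :=
  forall n, Rsum (fun i => Cabs (a i)) n <= K.
Definition l1 (a : seq) : Prop := exists K, l1_le a K.

Definition sadd (a b : seq) : seq := fun i => Cadd (a i) (b i).
Definition ssub (a b : seq) : seq := fun i => Csub (a i) (b i).
Definition sscal (c : C) (a : seq) : seq := fun i => Cmul c (a i).

(** Convolution for the max-semigroup:
    (a*b)_k = sum_{max(i,j)=k} a_i b_j = a_k * sum_{j<=k} b_j + b_k * sum_{i<k} a_i *)
Definition conv (a b : seq) : seq :=
  fun k => Cadd (Cmul (a k) (Csum b (S k))) (Cmul (b k) (Csum a k)).

(** * The projective tensor product l^1(N_v) (x)_p l^1(N_v), identified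
    (isometrically) with l^1(N x N):  T stands for sum T i j delta_i (x) delta_j. *)
Definition tens := nat -> nat -> C.

Definition l1t_le (T : tens) (K : R) : Prop :=
  forall n, Rsum (fun i => Rsum (fun j => Cabs (T i j)) n) n <= K.
Definition l1t (T : tens) : Prop := exists K, l1t_le T K.

Definition tadd (S T : tens) : tens := fun i j => Cadd (S i j) (T i j).
Definition tsub (S T : tens) : tens := fun i j => Csub (S i j) (T i j).
Definition tscal (c : C) (T : tens) : tens := fun i j => Cmul c (T i j).

(** a . (b (x) c) = ab (x) c *)
Definition lact (a : seq) (T : tens) : tens :=
  fun k l => conv a (fun p => T p l) k.
(** (b (x) c) . a = b (x) ca *)
Definition ract (T : tens) (a : seq) : tens :=
  fun k l => conv (T k) a l.
(** pi(b (x) c) = bc :  pi(T)_k = sum_{max(p,l)=k} T p l *)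
Definition piA (T : tens) : seq :=
  fun k => Cadd (Csum (fun l => T k l) (S k)) (Csum (fun p => T p k) k).

Definition bounded_linear (rho : seq -> tens) : Prop :=
  (forall a, l1 a -> l1t (rho a)) /\
  (forall a b, l1 a -> l1 b -> forall i j, rho (sadd a b) i j = tadd (rho a) (rho b) i j) /\
  (forall c a, l1 a -> forall i j, rho (sscal c a) i j = tscal c (rho a) i j) /\
  (exists M, forall a K, l1 a -> l1_le a K -> l1t_le (rho a) (M * K)).

Definition bimodule_morphism (rho : seq -> tens) : Prop :=
  forall a x, l1 a -> l1 x ->
    (forall i j, rho (conv a x) i j = lact a (rho x) i j) /\
    (forall i j, rho (conv x a) i j = ract (rho x) a i j).

Definition is_character (phi : seq -> C) : Prop :=
  (forall a b, l1 a -> l1 b -> phi (sadd a b) = Cadd (phi a) (phi b)) /\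
  (forall c a, l1 a -> phi (sscal c a) = Cmul c (phi a)) /\
  (forall a b, l1 a -> l1 b -> phi (conv a b) = Cmul (phi a) (phi b)) /\
  (exists a, l1 a /\ phi a <> C0) /\
  (exists M, forall a K, l1 a -> l1_le a K -> Cabs (phi a) <= M * K).

Definition Csum_to (a : seq) (s : C) : Prop :=
  Un_cv (fun n => fst (Csum a n)) (fst s) /\ Un_cv (fun n => snd (Csum a n)) (snd s).

Definition phi_inf (a : seq) : C :=
  match excluded_middle_informative (exists s, Csum_to a s) with
  | left H => proj1_sig (constructive_indefinite_description _ H)
  | right _ => C0
  end.

Definition phi_biprojective (phi : seq -> C) : Prop :=
  exists rho : seq -> tens,
    bounded_linear rho /\ bimodule_morphism rho /\
    forall a, l1 a -> phi (piA (rho a)) = phi a.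

Definition directed {I : Type} (le : I -> I -> Prop) : Prop :=
  (exists i : I, True) /\
  (forall i, le i i) /\
  (forall i j k, le i j -> le j k -> le i k) /\
  (forall i j, exists k, le i k /\ le j k).

Definition eventually {I : Type} (le : I -> I -> Prop) (P : I -> Prop) : Prop :=
  exists i0, forall i, le i0 i -> P i.

Definition approx_left_phi_biprojective (phi : seq -> C) : Prop :=
  exists (I : Type) (le : I -> I -> Prop) (rho : I -> seq -> tens),
    directed le /\
    (forall al, bounded_linear (rho al)) /\
    forall a x, l1 a -> l1 x ->
      (forall eps, eps > 0 -> eventually le (fun al =>
          l1t_le (tsub (lact a (rho al x)) (rho al (conv a x))) eps)) /\
      (forall eps, eps > 0 -> eventually le (fun al =>
          l1t_le (tsub (rho al (conv x a)) (tscal (phi a) (rho al x))) eps)) /\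
      (forall eps, eps > 0 -> eventually le (fun al =>
          Cabs (Csub (phi (piA (rho al x))) (phi x)) <= eps)).

Definition approx_left_character_biprojective : Prop :=
  forall phi, is_character phi -> approx_left_phi_biprojective phi.

(* Main.v *)
Require Import Defs.
From Stdlib Require Import Reals Lra Lia Classical FunctionalExtensionality ClassicalEpsilon.
From Coquelicot Require Complex.
Open Scope R_scope.

Lemma Cext (z w : Defs.C) : fst z = fst w -> snd z = snd w -> z = w.
Proof. destruct z, w; simpl; intros; subst; reflexivity. Qed.

Lemma Cabs_Cmod z : Cabs z = Complex.Cmod z.
Proof. unfold Cabs, Complex.Cmod. f_equal. simpl. ring. Qed.

Lemma Cabs_ge0 z : 0 <= Cabs z.
Proof. unfold Cabs. apply sqrt_pos. Qed.

Lemma Cabs_mul z w : Cabs (Cmul z w) = Cabs z * Cabs w.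
Proof. rewrite !Cabs_Cmod. apply Complex.Cmod_mult. Qed.

Lemma Cabs_add z w : Cabs (Cadd z w) <= Cabs z + Cabs w.
Proof. rewrite !Cabs_Cmod. apply Complex.Cmod_triangle. Qed.

Lemma Cabs_sub_sym z w : Cabs (Csub z w) = Cabs (Csub w z).
Proof. unfold Cabs, Csub, Cadd, Copp; simpl. f_equal. ring. Qed.

Lemma Cabs_sub z w : Cabs (Csub z w) <= Cabs z + Cabs w.
Proof.
  unfold Csub. eapply Rle_trans. apply Cabs_add.
  replace (Cabs (Copp w)) with (Cabs w). lra.
  unfold Cabs, Copp; simpl. f_equal. ring.
Qed.

Lemma Cabs_zero z : fst z = 0 -> snd z = 0 -> Cabs z = 0.
Proof. intros H1 H2. unfold Cabs. rewrite H1, H2. replace (0*0+0*0) with 0 by ring. apply sqrt_0. Qed.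

Lemma Cabs_one : Cabs (1,0) = 1.
Proof. unfold Cabs; simpl. replace (1*1+0*0) with 1 by ring. apply sqrt_1. Qed.

Lemma Cabs_fst z : Rabs (fst z) <= Cabs z.
Proof. rewrite Cabs_Cmod. apply (Complex.re_le_Cmod z). Qed.

Lemma Cabs_snd z : Rabs (snd z) <= Cabs z.
Proof. rewrite Cabs_Cmod. pose proof (Complex.Rmax_Cmod z).
  eapply Rle_trans; [|exact H]. apply Rmax_r. Qed.

Lemma Cabs_le_comp z : Cabs z <= Rabs (fst z) + Rabs (snd z).
Proof.
  unfold Cabs. rewrite <- (sqrt_square (Rabs (fst z) + Rabs (snd z))).
  2:{ pose proof (Rabs_pos (fst z)); pose proof (Rabs_pos (snd z)); lra. }
  apply sqrt_le_1_alt.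
  pose proof (Rabs_pos (fst z)); pose proof (Rabs_pos (snd z)).
  assert (E1: Rabs (fst z) * Rabs (fst z) = fst z * fst z) by (rewrite <- Rabs_mult; apply Rabs_right; apply Rle_ge, Rle_0_sqr).
  assert (E2: Rabs (snd z) * Rabs (snd z) = snd z * snd z) by (rewrite <- Rabs_mult; apply Rabs_right; apply Rle_ge, Rle_0_sqr).
  nra.
Qed.

Lemma Rsum_ext f g n : (forall i, (i < n)%nat -> f i = g i) -> Rsum f n = Rsum g n.
Proof. induction n; simpl; intros H; auto. rewrite IHn, H; auto. Qed.

Lemma Rsum_le f g n : (forall i, (i < n)%nat -> f i <= g i) -> Rsum f n <= Rsum g n.
Proof. induction n; simpl; intros H. lra. pose proof (H n ltac:(lia)). pose proof (IHn ltac:(intros; apply H; lia)). lra. Qed.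

Lemma Rsum_plus f g n : Rsum (fun i => f i + g i) n = Rsum f n + Rsum g n.
Proof. induction n; simpl. ring. rewrite IHn. ring. Qed.

Lemma Rsum_scal c f n : Rsum (fun i => c * f i) n = c * Rsum f n.
Proof. induction n; simpl. ring. rewrite IHn. ring. Qed.

Lemma Rsum_opp f n : Rsum (fun i => - f i) n = - Rsum f n.
Proof. induction n; simpl. ring. rewrite IHn. ring. Qed.

Lemma Rsum_zero n : Rsum (fun _ => 0) n = 0.
Proof. induction n; simpl. ring. rewrite IHn. ring. Qed.

Lemma Rsum_nonneg f n : (forall i, 0 <= f i) -> 0 <= Rsum f n.
Proof. intros H. induction n; simpl. lra. pose proof (H n). lra. Qed.

Lemma Rsum_mono f m n : (forall i, 0 <= f i) -> (m <= n)%nat -> Rsum f m <= Rsum f n.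
Proof. intros H Hmn. induction Hmn. lra. simpl. pose proof (H m0). lra. Qed.

Lemma Rsum_delta (r : R) m n :
  Rsum (fun i => if Nat.eqb i m then r else 0) n = if Nat.ltb m n then r else 0.
Proof.
  induction n; simpl. destruct m; reflexivity.
  rewrite IHn. destruct (Nat.eqb_spec n m); destruct (Nat.ltb_spec m n); destruct (Nat.ltb_spec m (S n)); try lia; lra.
Qed.

Lemma Rsum_S f n : Rsum f (S n) = Rsum f n + f n.
Proof. reflexivity. Qed.

Lemma Rsum_tail g m N :
  Rsum (fun i => if Nat.leb m i then g i else 0) N = Rsum g (Nat.max N m) - Rsum g m.
Proof.
  induction N. rewrite Nat.max_0_l. simpl. ring.
  rewrite Rsum_S, IHN. destruct (Nat.leb_spec m N).
  - rewrite !Nat.max_l by lia. rewrite Rsum_S. ring.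
  - rewrite !Nat.max_r by lia. ring.
Qed.

Lemma Rsum_swap (f : nat -> nat -> R) m n :
  Rsum (fun k => Rsum (fun p => f p k) m) n = Rsum (fun p => Rsum (fun k => f p k) n) m.
Proof.
  induction n; simpl. rewrite Rsum_zero. auto.
  rewrite IHn. rewrite <- Rsum_plus. reflexivity.
Qed.

Lemma Rsum_abs_le f g n : (forall i, Rabs (f i) <= g i) -> Rabs (Rsum f n) <= Rsum g n.
Proof.
  intros H. induction n; simpl. rewrite Rabs_R0; lra.
  eapply Rle_trans. apply Rabs_triang. pose proof (H n). lra.
Qed.

Lemma Rsum_diff_abs f g n d : (forall i, Rabs (f i) <= g i) ->
  Rabs (Rsum f (n + d) - Rsum f n) <= Rsum g (n + d) - Rsum g n.
Proof.
  intros H. induction d. rewrite Nat.add_0_r. replace (Rsum f n - Rsum f n) with 0 by ring. rewrite Rabs_R0; lra.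
  rewrite Nat.add_succ_r. simpl.
  replace (Rsum f (n + d) + f (n + d)%nat - Rsum f n) with ((Rsum f (n+d) - Rsum f n) + f (n+d)%nat) by ring.
  eapply Rle_trans. apply Rabs_triang. pose proof (H (n+d)%nat). lra.
Qed.

Lemma Csum_eq f n : Csum f n = (Rsum (fun i => fst (f i)) n, Rsum (fun i => snd (f i)) n).
Proof. induction n; simpl. reflexivity. rewrite IHn. reflexivity. Qed.

Lemma Cabs_Csum f n : Cabs (Csum f n) <= Rsum (fun i => Cabs (f i)) n.
Proof.
  induction n; simpl. rewrite Cabs_zero; simpl; auto; lra.
  eapply Rle_trans. apply Cabs_add. lra.
Qed.

Lemma l1_le_nonneg a K : l1_le a K -> 0 <= K.
Proof. intros H. specialize (H 0%nat). simpl in H. lra. Qed.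

Lemma Cabs_Csum_le a K n : l1_le a K -> Cabs (Csum a n) <= K.
Proof. intros H. eapply Rle_trans. apply Cabs_Csum. apply H. Qed.

Definition delta (m : nat) : seq := fun i => if Nat.eqb i m then (1,0) else C0.

Lemma Csum_delta m n : Csum (delta m) n = if Nat.ltb m n then (1,0) else C0.
Proof.
  rewrite Csum_eq.
  rewrite (Rsum_ext _ (fun i => if Nat.eqb i m then 1 else 0)).
  2:{ intros; unfold delta; destruct (Nat.eqb i m); reflexivity. }
  rewrite (Rsum_ext (fun i => snd (delta m i)) (fun i => if Nat.eqb i m then 0 else 0)).
  2:{ intros; unfold delta; destruct (Nat.eqb i m); reflexivity. }
  rewrite Rsum_delta, Rsum_delta. destruct (Nat.ltb m n); reflexivity.
Qed.

Lemma conv_delta_delta k n : conv (delta k) (delta n) = delta (Nat.max k n).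
Proof.
  apply functional_extensionality; intro i. unfold conv. rewrite !Csum_delta. unfold delta.
  destruct (Nat.eqb_spec i k), (Nat.eqb_spec i n), (Nat.eqb_spec i (Nat.max k n)),
    (Nat.ltb_spec n (S i)), (Nat.ltb_spec k i); try lia; apply Cext; simpl; ring.
Qed.

Lemma conv_delta0 a : conv a (delta 0) = a.
Proof.
  apply functional_extensionality; intro i. unfold conv. rewrite !Csum_delta. unfold delta.
  destruct (Nat.eqb_spec i 0), (Nat.ltb_spec 0 (S i)); try lia.
  - subst. simpl. apply Cext; simpl; ring.
  - apply Cext; simpl; ring.
Qed.

Lemma Csum_conv a x n : Csum (conv a x) n = Cmul (Csum a n) (Csum x n).
Proof.
  induction n. apply Cext; simpl; ring.
  simpl Csum. rewrite IHn. unfold conv. simpl Csum.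
  destruct (Csum a n), (Csum x n), (a n), (x n). apply Cext; simpl; ring.
Qed.

Lemma Csum_scal c v n : Csum (fun p => Cmul c (v p)) n = Cmul c (Csum v n).
Proof.
  induction n. apply Cext; simpl; ring.
  simpl Csum. rewrite IHn. destruct c, (Csum v n), (v n). apply Cext; simpl; ring.
Qed.

Lemma Csum_zero n : Csum (fun _ => C0) n = C0.
Proof. induction n. reflexivity. simpl Csum. rewrite IHn. apply Cext; simpl; ring. Qed.

Lemma tail_small a : l1 a -> forall eps, eps > 0 -> exists m0, forall m N,
  (m0 <= m)%nat -> (m <= N)%nat ->
  Rsum (fun i => Cabs (a i)) N - Rsum (fun i => Cabs (a i)) m <= eps.
Proof.
  intros [K HK] eps Heps.
  set (g := fun i => Cabs (a i)).
  set (E := fun r => exists n, r = Rsum g n).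
  assert (Hb : bound E). { exists K. intros r [n ->]. apply HK. }
  assert (He : exists x, E x). { exists 0, 0%nat. reflexivity. }
  destruct (completeness E Hb He) as [S [HS1 HS2]].
  assert (exists n0, Rsum g n0 > S - eps) as [n0 Hn0].
  { apply NNPP; intro Hn.
    assert (is_upper_bound E (S - eps)).
    { intros r [n ->]. apply Rnot_lt_le. intro Hc. apply Hn. exists n. lra. }
    specialize (HS2 _ H). lra. }
  exists n0. intros m N Hm HN.
  assert (Rsum g N <= S) by (apply HS1; exists N; reflexivity).
  assert (Rsum g n0 <= Rsum g m) by (apply Rsum_mono; auto; intros; apply Cabs_ge0).
  lra.
Qed.

Lemma tail_small' a : l1 a -> forall eps, eps > 0 -> exists m0, forall m N,
  (m0 <= m)%nat ->
  Rsum (fun i => if Nat.leb m i then Cabs (a i) else 0) N <= eps.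
Proof.
  intros Ha eps Heps. destruct (tail_small a Ha eps Heps) as [m0 Hm0].
  exists m0. intros m N Hm. rewrite Rsum_tail. apply Hm0; lia.
Qed.

Lemma Csum_add a b n : Csum (sadd a b) n = Cadd (Csum a n) (Csum b n).
Proof.
  induction n. apply Cext; simpl; ring.
  simpl Csum. rewrite IHn. unfold sadd. destruct (Csum a n), (Csum b n), (a n), (b n). apply Cext; simpl; ring.
Qed.

Lemma Cabs_C0 : Cabs C0 = 0.
Proof. apply Cabs_zero; reflexivity. Qed.

Lemma Rsum_first (f : nat -> R) n : (forall j, (j <> 0)%nat -> f j = 0) -> 0 <= f 0%nat -> Rsum f n <= f 0%nat.
Proof.
  intros H H0. induction n. simpl; lra. rewrite Rsum_S.
  destruct n. simpl. lra. rewrite H by lia. lra.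
Qed.

Lemma l1t_col (T : tens) K : (forall i j, (j <> 0)%nat -> Cabs (T i j) = 0) ->
  (forall n, Rsum (fun i => Cabs (T i 0%nat)) n <= K) -> l1t_le T K.
Proof.
  intros H1 H2 n. eapply Rle_trans; [|apply (H2 n)]. apply Rsum_le. intros i _.
  apply Rsum_first. intros; apply H1; auto. apply Cabs_ge0.
Qed.

Definition rhoG (v : nat -> seq) (k : nat -> nat) (m : nat) (x : seq) : tens :=
  fun i j => match j with O => Cmul (Csum x (S (k m))) (v m i) | S _ => C0 end.

Lemma rhoG_bl v k m : l1_le (v m) 2 -> bounded_linear (rhoG v k m).
Proof.
  intros Hv.
  assert (H4 : forall a K, l1 a -> l1_le a K -> l1t_le (rhoG v k m a) (2 * K)).
  { intros a K _ HK. apply l1t_col.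
    - intros i [|j] Hj. lia. apply Cabs_C0.
    - intros n. unfold rhoG.
      rewrite (Rsum_ext _ (fun i => Cabs (Csum a (S (k m))) * Cabs (v m i))).
      2:{ intros; apply Cabs_mul. }
      rewrite Rsum_scal.
      pose proof (Cabs_Csum_le a K (S (k m)) HK).
      pose proof (Hv n). pose proof (Cabs_ge0 (Csum a (S (k m)))).
      pose proof (l1_le_nonneg _ _ HK).
      pose proof (Rsum_nonneg (fun i => Cabs (v m i)) n (fun i => Cabs_ge0 _)).
      nra. }
  split; [|split; [|split]].
  - intros a [K HK]. exists (2 * K). apply H4; auto. exists K; auto.
  - intros a b _ _ i [|j]; unfold rhoG, tadd; simpl.
    + rewrite Csum_add. 
      destruct (Csum a (S (k m))), (Csum b (S (k m))), (v m i).
      apply Cext; simpl; ring.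
    + apply Cext; simpl; ring.
  - intros c a _ i [|j]; unfold rhoG, tscal.
    + unfold sscal. rewrite Csum_scal. destruct c, (Csum a (S (k m))), (v m i). apply Cext; simpl; ring.
    + apply Cext; simpl; ring.
  - exists 2. exact H4.
Qed.

Lemma piA_col (w : seq) : piA (fun i j => match j with O => w i | S _ => C0 end) = w.
Proof.
  apply functional_extensionality; intro k. unfold piA.
  rewrite !Csum_eq. apply Cext; simpl.
  - rewrite (Rsum_ext (fun i => fst (match i with 0%nat => w k | S _ => C0 end)) (fun i => if Nat.eqb i 0 then fst (w k) else 0)).
    2:{ intros [|i] _; reflexivity. }
    rewrite Rsum_delta. destruct k.
    + simpl. ring.
    + rewrite Rsum_zero. simpl. ring.
  - rewrite (Rsum_ext (fun i => snd (match i with 0%nat => w k | S _ => C0 end)) (fun i => if Nat.eqb i 0 then snd (w k) else 0)).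
    2:{ intros [|i] _; reflexivity. }
    rewrite Rsum_delta. destruct k.
    + simpl. ring.
    + rewrite Rsum_zero. simpl. ring.
Qed.

Lemma G_lemma (phi : seq -> Defs.C) (v : nat -> seq) (k : nat -> nat) :
  (forall m, l1_le (v m) 2) ->
  (forall a, l1 a -> forall eps, eps > 0 -> exists m0, forall m, (m0 <= m)%nat ->
     l1_le (ssub (conv a (v m)) (sscal (Csum a (S (k m))) (v m))) eps) ->
  (forall a, l1 a -> forall eps, eps > 0 -> exists m0, forall m, (m0 <= m)%nat ->
     Cabs (Csub (phi a) (Csum a (S (k m)))) <= eps) ->
  (forall m c, phi (fun i => Cmul c (v m i)) = c) ->
  approx_left_phi_biprojective phi.
Proof.
  intros Hv Ha Hb Hc.
  exists nat, le, (rhoG v k). split.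
  { split; [exists 0%nat; auto|split; [intros; lia|split; [intros; lia|]]].
    intros i j. exists (Nat.max i j). lia. }
  split. { intros m. apply rhoG_bl, Hv. }
  intros a x Ha1 Hx1. destruct Hx1 as [Kx HKx].
  pose proof (l1_le_nonneg _ _ HKx) as HKx0.
  assert (Hpsi : forall n, Cabs (Csum x n) <= Kx) by (intros; apply Cabs_Csum_le; auto).
  split; [|split].
  - intros eps Heps.
    set (e := eps / (Kx + 1)).
    assert (He : e * (Kx + 1) = eps) by (unfold e; field; lra).
    assert (He0 : e > 0) by (unfold e; apply Rdiv_lt_0_compat; lra).
    destruct (Ha a Ha1 e He0) as [m0 Hm0]. exists m0. intros m Hm.
    apply l1t_col.
    + intros i [|j] Hj. lia. apply Cabs_zero; unfold tsub, lact, conv, rhoG; rewrite ?Csum_eq; simpl; rewrite ?Rsum_zero; ring.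
    + intros n. unfold tsub, lact, rhoG.
      rewrite (Rsum_ext _ (fun i => Cabs (Csum x (S (k m))) *
           Cabs (ssub (conv a (v m)) (sscal (Csum a (S (k m))) (v m)) i))).
      2:{ intros i _. rewrite <- Cabs_mul. f_equal. rewrite Csum_conv. unfold conv at 1 2, ssub, sscal.
          rewrite Csum_scal.
          destruct (Csum x (S (k m))), (Csum a (S (k m))), (Csum (v m) (S i)), (v m i), (a i), (Csum a i).
          apply Cext; simpl; ring. }
      rewrite Rsum_scal. pose proof (Hm0 m Hm n). pose proof (Hpsi (S (k m))).
      pose proof (Cabs_ge0 (Csum x (S (k m)))).
      pose proof (Rsum_nonneg (fun i => Cabs (ssub (conv a (v m)) (sscal (Csum a (S (k m))) (v m)) i)) n (fun i => Cabs_ge0 _)).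
      nra.
  - intros eps Heps.
    set (e := eps / (2 * (Kx + 1))).
    assert (He : e * (2 * (Kx + 1)) = eps) by (unfold e; field; lra).
    assert (He0 : e > 0) by (unfold e; apply Rdiv_lt_0_compat; lra).
    destruct (Hb a Ha1 e He0) as [m0 Hm0]. exists m0. intros m Hm.
    apply l1t_col.
    + intros i [|j] Hj. lia. apply Cabs_zero; unfold tsub, tscal, rhoG; simpl; ring.
    + intros n. unfold tsub, tscal, rhoG.
      rewrite (Rsum_ext _ (fun i => (Cabs (Csum x (S (k m))) * Cabs (Csub (phi a) (Csum a (S (k m))))) * Cabs (v m i))).
      2:{ intros i _. rewrite (Cabs_sub_sym (phi a)), <- !Cabs_mul. f_equal.
          rewrite Csum_conv.
          destruct (Csum x (S (k m))), (Csum a (S (k m))), (phi a), (v m i).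
          apply Cext; simpl; ring. }
      rewrite Rsum_scal. pose proof (Hm0 m Hm). pose proof (Hpsi (S (k m))).
      pose proof (Hv m n).
      pose proof (Cabs_ge0 (Csum x (S (k m)))).
      pose proof (Cabs_ge0 (Csub (phi a) (Csum a (S (k m))))).
      pose proof (Rsum_nonneg (fun i => Cabs (v m i)) n (fun i => Cabs_ge0 _)).
      assert (Cabs (Csum x (S (k m))) * Cabs (Csub (phi a) (Csum a (S (k m)))) <= Kx * e) by nra.
      assert (0 <= Kx * e) by nra.
      nra.
  - intros eps Heps. destruct (Hb x (ex_intro _ Kx HKx) eps Heps) as [m0 Hm0].
    exists m0. intros m Hm. unfold rhoG.
    rewrite (piA_col (fun i => Cmul (Csum x (S (k m))) (v m i))).
    rewrite Hc. rewrite Cabs_sub_sym. apply Hm0; auto.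
Qed.

Lemma conv_delta_entry a m i :
  Cabs (ssub (conv a (delta m)) (sscal (Csum a (S m)) (delta m)) i)
  <= if Nat.leb (S m) i then Cabs (a i) else 0.
Proof.
  unfold ssub, sscal, conv. rewrite !Csum_delta. unfold delta.
  destruct (Nat.eqb_spec i m), (Nat.ltb_spec m (S i)), (Nat.leb_spec (S m) i); try lia.
  - subst. right. apply Cabs_zero; simpl Csum; destruct (Csum a m), (a m); simpl; ring.
  - right. f_equal. destruct (a i), (Csum a i), (Csum a (S m)). apply Cext; simpl; ring.
  - right. apply Cabs_zero; destruct (a i), (Csum a i), (Csum a (S m)); simpl; ring.
Qed.

Lemma Ha_delta a : l1 a -> forall eps, eps > 0 -> exists m0, forall m, (m0 <= m)%nat ->
  l1_le (ssub (conv a (delta m)) (sscal (Csum a (S m)) (delta m))) eps.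
Proof.
  intros Ha eps Heps. destruct (tail_small' a Ha eps Heps) as [m0 Hm0].
  exists m0. intros m Hm N. eapply Rle_trans. apply Rsum_le. intros; apply conv_delta_entry.
  apply Hm0. lia.
Qed.

Lemma delta_l1 m : l1_le (delta m) 1.
Proof.
  intros n. rewrite (Rsum_ext _ (fun i => if Nat.eqb i m then 1 else 0)).
  2:{ intros i _. unfold delta. destruct (Nat.eqb i m). apply Cabs_one. apply Cabs_C0. }
  rewrite Rsum_delta. destruct (Nat.ltb m n); lra.
Qed.

Lemma Cauchy_Rsum (f : nat -> R) a : l1 a -> (forall i, Rabs (f i) <= Cabs (a i)) ->
  Cauchy_crit (Rsum f).
Proof.
  intros Ha Hf eps Heps.
  destruct (tail_small a Ha (eps/2) ltac:(lra)) as [m0 Hm0].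
  exists m0. intros n m Hn Hm.
  assert (forall p q, (m0 <= p)%nat -> (p <= q)%nat -> Rdist (Rsum f q) (Rsum f p) < eps).
  { intros p q Hp Hq. replace q with (p + (q - p))%nat by lia.
    unfold Rdist. eapply Rle_lt_trans. apply Rsum_diff_abs with (g := fun i => Cabs (a i)). auto.
    replace (p + (q - p))%nat with q by lia. pose proof (Hm0 p q Hp Hq). lra. }
  destruct (Nat.le_ge_cases n m).
  - rewrite Rdist_sym. apply H; lia.
  - apply H; lia.
Qed.

Lemma l1_sum a : l1 a -> exists s, Csum_to a s.
Proof.
  intros Ha.
  destruct (R_complete _ (Cauchy_Rsum (fun i => fst (a i)) a Ha (fun i => Cabs_fst _))) as [l1v H1].
  destruct (R_complete _ (Cauchy_Rsum (fun i => snd (a i)) a Ha (fun i => Cabs_snd _))) as [l2v H2].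
  exists (l1v, l2v). split; simpl.
  - intros eps Heps. destruct (H1 eps Heps) as [N HN]. exists N. intros n Hn.
    rewrite Csum_eq. simpl. apply HN; auto.
  - intros eps Heps. destruct (H2 eps Heps) as [N HN]. exists N. intros n Hn.
    rewrite Csum_eq. simpl. apply HN; auto.
Qed.

Lemma phi_inf_spec a : (exists s, Csum_to a s) -> Csum_to a (phi_inf a).
Proof.
  intros H. unfold phi_inf. destruct (excluded_middle_informative _) as [H'|H'].
  - exact (proj2_sig (constructive_indefinite_description _ H')).
  - contradiction.
Qed.

Lemma Csum_to_unique a s t : Csum_to a s -> Csum_to a t -> s = t.
Proof.
  intros [A1 A2] [B1 B2]. apply Cext.
  eapply UL_sequence; eauto. eapply UL_sequence; eauto.
Qed.

Lemma phi_inf_val a s : Csum_to a s -> phi_inf a = s.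
Proof.
  intros H. eapply Csum_to_unique. apply phi_inf_spec. eauto. auto.
Qed.

Lemma Csum_to_ev a s N : (forall n, (N <= n)%nat -> Csum a n = s) -> Csum_to a s.
Proof.
  intros H. split; intros eps Heps; exists N; intros n Hn; rewrite (H n Hn);
  unfold Rdist; replace (_ - _) with 0 by ring; rewrite Rabs_R0; lra.
Qed.

Lemma phi_inf_spec_nz a s : phi_inf a = s -> s <> C0 -> Csum_to a s.
Proof.
  unfold phi_inf. destruct (excluded_middle_informative _) as [H'|H']; intros E Hs.
  - rewrite <- E. exact (proj2_sig (constructive_indefinite_description _ H')).
  - subst. contradiction.
Qed.

Lemma Hb_inf a : l1 a -> forall eps, eps > 0 -> exists m0, forall m, (m0 <= m)%nat ->
     Cabs (Csub (phi_inf a) (Csum a (S m))) <= eps.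
Proof.
  intros Ha eps Heps. destruct (phi_inf_spec a (l1_sum a Ha)) as [H1 H2].
  destruct (H1 (eps/2) ltac:(lra)) as [N1 HN1].
  destruct (H2 (eps/2) ltac:(lra)) as [N2 HN2].
  exists (Nat.max N1 N2). intros m Hm.
  eapply Rle_trans. apply Cabs_le_comp.
  specialize (HN1 (S m) ltac:(lia)). specialize (HN2 (S m) ltac:(lia)).
  unfold Rdist in *. unfold Csub, Cadd, Copp. cbn [fst snd].
  rewrite Rabs_minus_sym in HN1, HN2. unfold Rminus in HN1, HN2. lra.
Qed.

Lemma Hc_inf m c : phi_inf (fun i => Cmul c (delta m i)) = c.
Proof.
  apply phi_inf_val. apply Csum_to_ev with (N := S m). intros n Hn.
  change (fun i => Cmul c (delta m i)) with (sscal c (delta m)).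
  unfold sscal. rewrite Csum_scal, Csum_delta.
  destruct (Nat.ltb_spec m n); try lia. destruct c; apply Cext; simpl; ring.
Qed.

Theorem part2 : approx_left_phi_biprojective phi_inf.
Proof.
  apply (G_lemma phi_inf delta (fun m => m)).
  - intros m n. pose proof (delta_l1 m n). lra.
  - apply Ha_delta.
  - apply Hb_inf.
  - apply Hc_inf.
Qed.

Lemma delta_l1' m : l1 (delta m).
Proof. exists 1. apply delta_l1. Qed.

Lemma piA_sq (T : tens) n :
  Rsum (fun m => fst (piA T m)) n = Rsum (fun l => Rsum (fun p => fst (T p l)) n) n.
Proof.
  assert (E : forall m, fst (piA T m) = Rsum (fun l => fst (T m l)) (S m) + Rsum (fun p => fst (T p m)) m).
  { intros m. unfold piA. rewrite !Csum_eq. reflexivity. }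
  induction n. reflexivity.
  rewrite Rsum_S, IHn, E. rewrite Rsum_S.
  rewrite (Rsum_ext (fun l => Rsum (fun p => fst (T p l)) (S n))
     (fun l => Rsum (fun p => fst (T p l)) n + fst (T n l))) by (intros; reflexivity).
  rewrite Rsum_plus. rewrite !Rsum_S. ring.
Qed.

Theorem part3 : ~ phi_biprojective phi_inf.
Proof.
  intros [rho [Hbl [Hbm Hpi]]].
  set (T := rho (delta 0)).
  assert (HT : l1t T) by (apply (proj1 Hbl); apply delta_l1').
  destruct HT as [K HK].
  assert (Hcol : forall k l, (l < k)%nat -> fst (Csum (fun p => T p l) (S k)) = 0).
  { intros k l Hlk.
    destruct (Hbm (delta k) (delta 0) (delta_l1' _) (delta_l1' _)) as [HL HR].
    specialize (HL k l). specialize (HR k l).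
    rewrite conv_delta_delta, Nat.max_0_r in HL. rewrite conv_delta_delta, Nat.max_0_l in HR.
    rewrite HL in HR. clear HL. fold T in HR.
    unfold lact, ract, conv in HR. rewrite !Csum_delta in HR.
    destruct (Nat.ltb_spec k k); try lia. destruct (Nat.ltb_spec k (S l)); try lia.
    unfold delta in HR. rewrite Nat.eqb_refl in HR.
    destruct (Nat.eqb_spec l k); try lia.
    apply (f_equal fst) in HR. simpl in HR |- *.
    destruct (T k l). simpl in HR |- *. lra. }
  assert (Hdiag : forall k, fst (Csum (piA T) (S k)) = Rsum (fun p => fst (T p k)) (S k)).
  { intros k. rewrite Csum_eq. change (fst (?a, ?b)) with a. rewrite piA_sq. rewrite Rsum_S.
    rewrite (Rsum_ext _ (fun _ => 0)). rewrite Rsum_zero. ring.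
    intros l Hl. rewrite <- (Hcol k l Hl). rewrite Csum_eq. reflexivity. }
  set (c := fun k => Rsum (fun p => Cabs (T p k)) (S k)).
  assert (Hc0 : forall k, 0 <= c k) by (intros; apply Rsum_nonneg; intros; apply Cabs_ge0).
  assert (HcK : forall n, Rsum c n <= K).
  { intros n. eapply Rle_trans; [|apply (HK n)].
    rewrite <- (Rsum_swap (fun p k => Cabs (T p k))).
    apply Rsum_le. intros k Hk. apply Rsum_mono. intros; apply Cabs_ge0. lia. }
  assert (Hsmall : forall N, exists k, (N <= k)%nat /\ c k < 1/2).
  { intros N. apply NNPP. intros Hn.
    assert (Hge : forall k, (N <= k)%nat -> c k >= 1/2).
    { intros k Hk. apply Rnot_lt_ge. intro. apply Hn. exists k; auto. }
    assert (Hgrow : forall L, Rsum c (N + L) >= INR L / 2).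
    { induction L. rewrite Nat.add_0_r. simpl. pose proof (Rsum_nonneg c N Hc0). lra.
      rewrite Nat.add_succ_r, Rsum_S, S_INR. pose proof (Hge (N + L)%nat ltac:(lia)). lra. }
    destruct (INR_unbounded (2 * K)) as [L HL].
    pose proof (Hgrow L). pose proof (HcK (N + L)%nat). lra. }
  assert (H1 : phi_inf (delta 0) = (1,0)).
  { apply phi_inf_val. apply Csum_to_ev with (N := 1%nat). intros n Hn.
    rewrite Csum_delta. destruct (Nat.ltb_spec 0 n); try lia. reflexivity. }
  assert (Hp : phi_inf (piA T) = (1,0)) by (unfold T; rewrite Hpi, H1; auto; apply delta_l1').
  apply phi_inf_spec_nz in Hp.
  2:{ unfold C0. intro E. injection E. lra. }
  destruct Hp as [Hp _]. destruct (Hp (1/2) ltac:(lra)) as [N HN].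
  destruct (Hsmall N) as [k [Hk Hck]].
  specialize (HN (S k) ltac:(lia)). change (fst (1,0)) with 1 in HN. unfold Rdist in HN.
  apply Rabs_def2 in HN.
  rewrite Hdiag in HN.
  assert (Rabs (Rsum (fun p => fst (T p k)) (S k)) <= c k).
  { apply Rsum_abs_le. intros; apply Cabs_fst. }
  pose proof (Rle_abs (Rsum (fun p => fst (T p k)) (S k))). lra.
Qed.

Lemma idem_C (z : Defs.C) : z = Cmul z z -> z = C0 \/ z = (1,0).
Proof.
  destruct z as [x y]. unfold Cmul; simpl. intros E. injection E; intros E2 E1.
  destruct (Req_dec y 0).
  - subst. assert (x * (x - 1) = 0) by (simpl in *; nra).
    apply Rmult_integral in H. unfold C0. destruct H; [left|right]; apply Cext; simpl; lra.
  - exfalso. assert (x = 1/2).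
    { assert (y * (2 * x - 1) = 0) by nra. apply Rmult_integral in H0. destruct H0. contradiction. lra. }
    subst. nra.
Qed.

Lemma Csub_self_abs z : Cabs (Csub z z) = 0.
Proof. apply Cabs_zero; simpl; ring. Qed.

Theorem part1 : approx_left_character_biprojective.
Proof.
  intros phi [Hadd [Hsc [Hmul [[a0 [Ha0 Hne]] [M HM]]]]].
  assert (Hidem : forall n, phi (delta n) = C0 \/ phi (delta n) = (1,0)).
  { intros n. apply idem_C. rewrite <- Hmul by apply delta_l1'.
    rewrite conv_delta_delta, Nat.max_id. reflexivity. }
  assert (H0 : phi (delta 0) = (1,0)).
  { destruct (Hidem 0%nat) as [E|E]; auto. exfalso. apply Hne.
    rewrite <- (conv_delta0 a0). rewrite Hmul by (auto; apply delta_l1').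
    rewrite E. destruct (phi a0). apply Cext; simpl; ring. }
  destruct (classic (forall n, phi (delta n) = (1,0))) as [HB|HA].
  - (* phi = phi_infinity *)
    apply (G_lemma phi delta (fun m => m)).
    + intros m n. pose proof (delta_l1 m n). lra.
    + apply Ha_delta.
    + intros a Ha eps Heps.
      set (e := eps / (Rabs M + 1)).
      assert (He : e * (Rabs M + 1) = eps) by (unfold e; field; pose proof (Rabs_pos M); lra).
      assert (He0 : e > 0) by (unfold e; apply Rdiv_lt_0_compat; pose proof (Rabs_pos M); lra).
      destruct (tail_small' a Ha e He0) as [m0 Hm0]. exists m0. intros m Hm.
      set (tl := fun i => if Nat.leb (S m) i then a i else C0).
      assert (Hdec : conv a (delta m) = sadd (sscal (Csum a (S m)) (delta m)) tl).
      { apply functional_extensionality; intro i. unfold conv, sadd, sscal, tl.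
        rewrite !Csum_delta. unfold delta.
        destruct (Nat.eqb_spec i m), (Nat.ltb_spec m (S i)), (Nat.leb_spec (S m) i); try lia.
        - subst i. simpl Csum. destruct (Csum a m), (a m). apply Cext; simpl; ring.
        - destruct (a i), (Csum a i), (Csum a (S m)). apply Cext; simpl; ring.
        - destruct (a i), (Csum a i), (Csum a (S m)). apply Cext; simpl; ring. }
      assert (Htl : l1_le tl e).
      { intros N. eapply Rle_trans; [|apply (Hm0 (S m) N); lia].
        apply Rsum_le. intros i _. unfold tl. destruct (Nat.leb (S m) i). lra. rewrite Cabs_C0; lra. }
      assert (Hs : l1 (sscal (Csum a (S m)) (delta m))).
      { exists (Cabs (Csum a (S m)) * 1). intros N. unfold sscal.
        rewrite (Rsum_ext _ (fun i => Cabs (Csum a (S m)) * Cabs (delta m i))) by (intros; apply Cabs_mul).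
        rewrite Rsum_scal. apply Rmult_le_compat_l. apply Cabs_ge0. apply delta_l1. }
      assert (E : Cmul (phi a) (1,0) = Cadd (Cmul (Csum a (S m)) (1,0)) (phi tl)).
      { rewrite <- (HB m). rewrite <- Hmul by (auto; apply delta_l1').
        rewrite Hdec, Hadd by (auto; exists e; auto). rewrite Hsc by apply delta_l1'. reflexivity. }
      assert (E2 : Csub (phi a) (Csum a (S m)) = phi tl).
      { revert E. generalize (phi a) (Csum a (S m)) (phi tl). intros [] [] [] E.
        injection E; intros. apply Cext; simpl in *; lra. }
      rewrite E2. eapply Rle_trans. apply (HM tl e); auto. exists e; auto.
      pose proof (Rle_abs M). nra.
    + intros m c. change (fun i => Cmul c (delta m i)) with (sscal c (delta m)).
      rewrite Hsc by apply delta_l1'. rewrite HB. destruct c; apply Cext; simpl; ring.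
  - (* finite character *)
    apply not_all_ex_not in HA. destruct HA as [n Hn].
    assert (Hn0 : phi (delta n) = C0) by (destruct (Hidem n); auto; contradiction).
    assert (exists k, phi (delta k) = (1,0) /\ phi (delta (S k)) = C0) as [k [Hk1 Hk2]].
    { clear Hn. induction n.
      - rewrite H0 in Hn0. unfold C0 in Hn0. injection Hn0; lra.
      - destruct (Hidem n) as [E|E]; auto. exists n; auto. }
    set (u := fun i => Csub (delta k i) (delta (S k) i)).
    assert (Hu_dec : u = sadd (delta k) (sscal (-1,0) (delta (S k)))).
    { apply functional_extensionality; intro i. unfold u, sadd, sscal.
      destruct (delta k i), (delta (S k) i). apply Cext; simpl; ring. }
    assert (Hul : l1_le u 2).
    { intros N. eapply Rle_trans.
      apply (Rsum_le _ (fun i => (if Nat.eqb i k then 1 else 0) + (if Nat.eqb i (S k) then 1 else 0))).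
      { intros i _. unfold u. eapply Rle_trans. apply Cabs_sub. unfold delta.
        destruct (Nat.eqb i k), (Nat.eqb i (S k)); rewrite ?Cabs_one, ?Cabs_C0; lra. }
      rewrite Rsum_plus, !Rsum_delta. destruct (Nat.ltb k N), (Nat.ltb (S k) N); lra. }
    assert (Hul1 : l1 u) by (exists 2; auto).
    assert (Hphiu : phi u = (1,0)).
    { rewrite Hu_dec. rewrite Hadd, Hsc, Hk1, Hk2; try apply delta_l1'.
      apply Cext; simpl; ring. exists 1. intros N. unfold sscal.
      rewrite (Rsum_ext _ (fun i => Cabs (-1,0) * Cabs (delta (S k) i))) by (intros; apply Cabs_mul).
      rewrite Rsum_scal. replace (Cabs (-1,0)) with 1. pose proof (delta_l1 (S k) N). lra.
      unfold Cabs; simpl. replace (-1 * -1 + 0 * 0) with 1 by ring. rewrite sqrt_1; auto. }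
    assert (Hconv : forall a, conv a u = sscal (Csum a (S k)) u).
    { intros a. rewrite Hu_dec. apply functional_extensionality; intro i.
      unfold conv. rewrite Csum_add. unfold sscal at 1. rewrite Csum_scal, !Csum_delta.
      unfold sadd, sscal, delta.
      destruct (Nat.eqb_spec i k), (Nat.eqb_spec i (S k)), (Nat.ltb_spec k (S i)), (Nat.ltb_spec (S k) (S i)); try lia.
      - subst. simpl Csum. destruct (Csum a k), (a k). apply Cext; simpl; ring.
      - subst. destruct (Csum a (S k)), (a (S k)). apply Cext; simpl; ring.
      - destruct (Csum a (S k)), (Csum a i), (a i). apply Cext; simpl; ring.
      - destruct (Csum a (S k)), (Csum a i), (a i). apply Cext; simpl; ring. }
    assert (Hval : forall a, l1 a -> phi a = Csum a (S k)).
    { intros a Ha. assert (E : Cmul (phi a) (phi u) = Cmul (Csum a (S k)) (phi u)).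
      { rewrite <- Hmul, <- Hsc by auto. rewrite Hconv. reflexivity. }
      rewrite Hphiu in E. revert E. generalize (phi a) (Csum a (S k)). intros [] [] E.
      injection E; intros. apply Cext; simpl in *; lra. }
    apply (G_lemma phi (fun _ => u) (fun _ => k)).
    + intros _. auto.
    + intros a Ha eps Heps. exists 0%nat. intros m _ N. rewrite Hconv.
      rewrite (Rsum_ext _ (fun _ => 0)). rewrite Rsum_zero; lra.
      intros i _. apply Cabs_zero; unfold ssub; simpl; ring.
    + intros a Ha eps Heps. exists 0%nat. intros m _. rewrite (Hval a Ha), Csub_self_abs. lra.
    + intros m c. change (fun i => Cmul c (u i)) with (sscal c u).
      rewrite Hsc, Hphiu by auto. destruct c; apply Cext; simpl; ring.
Qed.

Theorem mainTheorem18 :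
  approx_left_character_biprojective /\
  approx_left_phi_biprojective phi_inf /\
  ~ phi_biprojective phi_inf.
Proof.
  split; [exact part1 | split; [exact part2 | exact part3]].
Qed.
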